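(* Consider full-batch Noisy-SGD ($\mathcal{B}_t=\mathcal{B}_t'=[n]$) on adjacent datasets $\mathcal{D},\mathcal{D}'$ with iterates $W_t,W_t'$ and $W_0=W_0'$. Assume $\nabla\ell_i,\nabla\ell_i'$ are $(L,\lambda)$-Hölder continuous on $\mathcal{K}$ for all $i\in[n]$, with $L\ge0$, $\lambda\in(0,1]$. Let $g(x;M)=x+Mx^\lambda$. Then for all $t\ge0$, $$W_\infty(W_t,W_t')\le\min(D_t,D),\qquad D_t=\min\big(g(D_{t-1};\eta L)+2\eta K/n,\ D_{t-1}+2\eta K\big),\quad D_0=0.$$
   Context: Setting (Noisy-SGD). Let $\mathcal{K}\subset\mathbb{R}^d$ be a nonempty closed convex set of diameter $D$, $\Pi_{\mathcal{K}}$ the Euclidean projection. Let $\ell(\cdot;d)$, $d\in\mathcal{X}$, be differentiable losses on $\mathcal{K}$; for $\mathcal{D}=(d_1,\dots,d_n)$ write $\ell_i=\ell(\cdot;d_i)$, and $\ell_i'=\ell(\cdot;d_i')$ for $\mathcal{D}'$. $\Pi_{B_K}(v)=v\min(1,K/\|v\|)$. Noisy-SGD: $W_{t+1}=\Pi_{\mathcal{K}}\big[W_t-\eta\frac1b\sum_{i\in\mathcal{B}_t}\Pi_{B_K}[\nabla\ell_i(W_t)]+G_t\big]$, $G_t$ i.i.d. $N(0,\sigma^2I_d)$; $W_t'$ analogously on $\mathcal{D}'$. Adjacent datasets differ in exactly one index. $(L,\lambda)$-Hölder: $\|f(w)-f(w')\|\le L\|w-w'\|^\lambda$. $W_\infty(\mu,\nu)=\inf_{\gamma\in\Gamma(\mu,\nu)}\operatorname{ess\,sup}_{(X,Y)\sim\gamma}\|X-Y\|$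 over couplings, applied to the laws of $W_t,W_t'$. *)

(* Defs.v *)
(* Euclidean space R^d is modelled as d.-tuple R,
   which carries the product (Borel) sigma-algebra of mathcomp-analysis. *)
From HB Require Import structures.
From mathcomp Require Import all_boot all_order all_algebra.
From mathcomp Require Import all_classical all_reals all_analysis.
From mathcomp Require Import ess_sup_inf.
Set Implicit Arguments. Unset Strict Implicit. Unset Printing Implicit Defensive.
Import Order.TTheory GRing.Theory Num.Theory.
Local Open Scope classical_set_scope.
Local Open Scope ring_scope.

Section Vec.
Variables (R : realType) (d : nat).
Definition Vec := d.-tuple R.
Definition vadd (u v : Vec) : Vec := [tuple tnth u i + tnth v i | i < d].
Definition vsub (u v : Vec) : Vec := [tuple tnth u i - tnth v i | i < d].
Definition vscale (a : R) (v : Vec) : Vec := [tuple a * tnth v i | i < d].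
Definition vzero : Vec := [tuple 0 | i < d].
Definition vdot (u v : Vec) : R := \sum_(i < d) tnth u i * tnth v i.
Definition vnorm (v : Vec) : R := Num.sqrt (vdot v v).
Definition vdist (u v : Vec) : R := vnorm (vsub u v).

(* Pi_{B_K}(v) = v * min(1, K/||v||)  (for v = 0 this gives 0) *)
Definition clipB (C : R) (v : Vec) : Vec := vscale (Num.min 1 (C / vnorm v)) v.

Definition closed_vset (K : set Vec) : Prop :=
  forall x, (forall e, 0 < e -> exists2 y, K y & vdist x y < e) -> K x.
Definition convex_vset (K : set Vec) : Prop :=
  forall x y a, K x -> K y -> 0 <= a <= 1 ->
    K (vadd (vscale a x) (vscale (1 - a) y)).
Definition is_diameter (K : set Vec) (D : R) : Prop :=
  (forall x y, K x -> K y -> vdist x y <= D) /\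
  (forall e, 0 < e -> exists x y, [/\ K x, K y & D - e < vdist x y]).
Definition is_proj (K : set Vec) (x p : Vec) : Prop :=
  K p /\ forall y, K y -> vdist x p <= vdist x y.

Definition has_gradient_at (f : Vec -> R) (w g : Vec) : Prop :=
  forall e, 0 < e -> exists2 del, 0 < del & forall h, vnorm h < del ->
    `|f (vadd w h) - f w - vdot g h| <= e * vnorm h.

Definition holder_on (K : set Vec) (L lam : R) (f : Vec -> Vec) : Prop :=
  forall w w', K w -> K w' -> vdist (f w) (f w') <= L * (vdist w w') `^ lam.
End Vec.

Definition gfun (R : realType) (lam M x : R) : R := x + M * x `^ lam.

Fixpoint Dseq (R : realType) (lam eta L C : R) (n : nat) (t : nat) : R :=
  match t with
  | 0 => 0
  | t'.+1 => Num.min (gfun lam (eta * L) (Dseq lam eta L C n t') + 2 * eta * C / n%:R)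
                     (Dseq lam eta L C n t' + 2 * eta * C)
  end.

Fixpoint noisy_sgd (R : realType) (d n : nat) (T : Type)
    (proj : Vec R d -> Vec R d) (grads : 'I_n -> Vec R d -> Vec R d)
    (eta C : R) (G : nat -> T -> Vec R d) (w0 : Vec R d) (t : nat) (om : T)
    : Vec R d :=
  match t with
  | 0 => w0
  | t'.+1 =>
      let w := noisy_sgd proj grads eta C G w0 t' om in
      proj (vadd (vsub w (vscale (eta / n%:R)
                   (\big[@vadd R d / vzero R d]_(i < n) clipB C (grads i w))))
                 (G t' om))
  end.

Definition mutually_independent (dO : measure_display) (T : measurableType dO)
    (R : realType) (P : probability T R) (I : eqType) (Xs : I -> T -> R) : Prop :=
  forall (S : seq I) (B : I -> set R), uniq S -> (forall i, measurable (B i)) ->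
    P (\bigcap_(i in [set` S]) (Xs i @^-1` B i)) =
    (\prod_(i <- S) P (Xs i @^-1` B i))%E.

(* G_t, t in nat, i.i.d. N(0, sigma^2 I_d): all coordinates (t,i) are
   independent real N(0, sigma^2) random variables. *)
Definition iid_gaussian_noise (dO : measure_display) (T : measurableType dO)
    (R : realType) (d : nat) (P : probability T R) (sigma : R)
    (G : nat -> T -> Vec R d) : Prop :=
  let coord := fun (ti : nat * 'I_d) (om : T) => tnth (G ti.1 om) ti.2 in
  [/\ forall ti, measurable_fun [set: T] (coord ti),
      forall ti B, measurable B -> P (coord ti @^-1` B) = normal_prob 0 sigma B
    & mutually_independent P coord].

Definition is_coupling (R : realType) (d : nat) (mu nu : set (Vec R d) -> \bar R)
    (g : probability (Vec R d * Vec R d)%type R) : Prop :=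
  forall A, measurable A -> g (A `*` setT) = mu A /\ g (setT `*` A) = nu A.

Definition W_infty (R : realType) (d : nat) (mu nu : set (Vec R d) -> \bar R) : \bar R :=
  ereal_inf [set ess_sup g (fun z => (vdist z.1 z.2)%:E) | g in is_coupling mu nu].

(* Main.v *)
Require Import Defs.
From HB Require Import structures.
From mathcomp Require Import all_boot all_order all_algebra.
From mathcomp Require Import all_classical all_reals all_analysis.
From mathcomp Require Import ess_sup_inf.
From mathcomp Require Import measurable_realfun.
From mathcomp Require Import ring lra.
Import Order.TTheory GRing.Theory Num.Theory.
Local Open Scope classical_set_scope.
Local Open Scope ring_scope.

Set Implicit Arguments. Unset Strict Implicit. Unset Printing Implicit Defensive.

Section VecAlg.
Variables (R : realType) (d : nat).
Implicit Types u v w x y z : Vec R d.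

Lemma tnth_vadd u v i : tnth (vadd u v) i = tnth u i + tnth v i.
Proof. by rewrite /vadd tnth_mktuple. Qed.
Lemma tnth_vsub u v i : tnth (vsub u v) i = tnth u i - tnth v i.
Proof. by rewrite /vsub tnth_mktuple. Qed.
Lemma tnth_vscale a v i : tnth (vscale a v) i = a * tnth v i.
Proof. by rewrite /vscale tnth_mktuple. Qed.
Lemma tnth_vzero i : tnth (vzero R d) i = 0.
Proof. by rewrite /vzero tnth_mktuple. Qed.

Definition tnthE := (tnth_vadd, tnth_vsub, tnth_vscale, tnth_vzero).

Lemma vdot_ge0 v : 0 <= vdot v v.
Proof. by apply: sumr_ge0 => i _; rewrite -expr2 sqr_ge0. Qed.

Lemma vnorm_ge0 v : 0 <= vnorm v.
Proof. exact: sqrtr_ge0. Qed.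

Lemma vnorm_sq v : vnorm v ^+ 2 = vdot v v.
Proof. by rewrite sqr_sqrtr // vdot_ge0. Qed.

Lemma vdist_ge0 u v : 0 <= vdist u v.
Proof. exact: vnorm_ge0. Qed.

Lemma sum_expand (f g : 'I_d -> R) (a b : R) :
  \sum_i (a * f i + b * g i) ^+ 2 =
  a ^+ 2 * \sum_i f i * f i + 2 * a * b * \sum_i f i * g i + b ^+ 2 * \sum_i g i * g i.
Proof.
rewrite !mulr_sumr -!big_split /=; apply: eq_bigr => i _; ring.
Qed.

Lemma CS_sq u v : vdot u v ^+ 2 <= vdot u u * vdot v v.
Proof.
set a := vdot u u; set b := vdot u v; set c := vdot v v.
have c0 : 0 <= c by exact: vdot_ge0.
have [c00|cpos] := eqVneq c 0.
  have v0 : forall i, tnth v i = 0.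
    move=> i; have : \sum_(j < d) tnth v j * tnth v j = 0 by [].
    move/eqP; rewrite psumr_eq0; last by move=> j _; rewrite -expr2 sqr_ge0.
    by move/allP => /(_ i (mem_index_enum _)); rewrite mulf_eq0 orbb => /eqP.
  have -> : b = 0 by rewrite /b /vdot big1 // => i _; rewrite v0 mulr0.
  by rewrite expr0n /= mulr_ge0 // vdot_ge0.
have cp : 0 < c by rewrite lt_neqAle eq_sym cpos c0.
have H : 0 <= \sum_i (c * tnth u i + (- b) * tnth v i) ^+ 2.
  by apply: sumr_ge0 => i _; rewrite sqr_ge0.
rewrite sum_expand -/a -/c in H.
rewrite -/b in H.
have E : c ^+ 2 * a + 2 * c * - b * b + (- b) ^+ 2 * c = c * (a * c - b ^+ 2) by ring.
rewrite E in H.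
rewrite -subr_ge0; rewrite pmulr_rge0 // in H.
Qed.

Lemma CS u v : vdot u v <= vnorm u * vnorm v.
Proof.
rewrite /vnorm -sqrtrM ?vdot_ge0 //.
apply: (le_trans (ler_norm _)).
by rewrite -sqrtr_sqr ler_sqrt ?mulr_ge0 ?vdot_ge0 // CS_sq.
Qed.

Lemma le_vnorm u v : vdot u u <= vdot v v -> vnorm u <= vnorm v.
Proof. by move=> h; rewrite /vnorm ler_sqrt // vdot_ge0. Qed.

Lemma vnorm_le_sq u (r : R) : 0 <= r -> vdot u u <= r ^+ 2 -> vnorm u <= r.
Proof. by move=> r0 h; rewrite /vnorm -[X in _ <= X](ger0_norm r0) -sqrtr_sqr ler_sqrt // sqr_ge0. Qed.

Lemma vnorm_add u v : vnorm (vadd u v) <= vnorm u + vnorm v.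
Proof.
apply: vnorm_le_sq; first by rewrite addr_ge0 ?vnorm_ge0.
have -> : vdot (vadd u v) (vadd u v) = vdot u u + 2 * vdot u v + vdot v v.
  rewrite /vdot mulr_sumr -!big_split; apply: eq_bigr => i _; rewrite /= !tnthE; ring.
have := CS u v.
rewrite -(vnorm_sq u) -(vnorm_sq v); nra.
Qed.

Lemma vnormZ a v : vnorm (vscale a v) = `|a| * vnorm v.
Proof.
rewrite /vnorm -sqrtr_sqr -sqrtrM ?sqr_ge0 //; congr Num.sqrt.
rewrite /vdot mulr_sumr; apply: eq_bigr => i _; rewrite /= !tnthE; ring.
Qed.

Lemma vnormN v : vnorm (vscale (-1) v) = vnorm v.
Proof. by rewrite vnormZ normrN normr1 mul1r. Qed.

Lemma vdotC u v : vdot u v = vdot v u.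
Proof. by apply: eq_bigr => i _; rewrite mulrC. Qed.

Lemma vdistC u v : vdist u v = vdist v u.
Proof.
rewrite /vdist /vnorm; congr Num.sqrt; apply: eq_bigr => i _; rewrite /= !tnthE; ring.
Qed.

Lemma vdist_triangle x y z : vdist x z <= vdist x y + vdist y z.
Proof.
rewrite /vdist; have -> : vsub x z = vadd (vsub x y) (vsub y z).
  by apply: eq_from_tnth => i; rewrite !tnthE; ring.
exact: vnorm_add.
Qed.

Lemma vdistxx x : vdist x x = 0.
Proof.
rewrite /vdist /vnorm /vdot big1 ?sqrtr0 // => i _; rewrite !tnthE subrr mul0r //.
Qed.

Lemma vdot_sq_eq0 v : vdot v v = 0 -> forall i, tnth v i = 0.
Proof.
move=> h i; move/eqP: h; rewrite psumr_eq0; last by move=> j _; rewrite -expr2 sqr_ge0.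
by move/allP => /(_ i (mem_index_enum _)); rewrite mulf_eq0 orbb => /eqP.
Qed.

Lemma vdist_eq0 x y : vdist x y = 0 -> x = y.
Proof.
move=> h; have : vdot (vsub x y) (vsub x y) = 0.
  by rewrite -vnorm_sq -/(vdist x y) h expr0n.
move/vdot_sq_eq0 => H; apply: eq_from_tnth => i; move: (H i); rewrite tnthE.
by move/eqP; rewrite subr_eq0 => /eqP.
Qed.

Lemma tnth_le_vdist x y i : `|tnth x i - tnth y i| <= vdist x y.
Proof.
rewrite /vdist /vnorm -sqrtr_sqr ler_sqrt ?vdot_ge0 //.
rewrite /vdot (bigD1 i) //= !tnthE -expr2 lerDl.
by apply: sumr_ge0 => j _; rewrite -expr2 sqr_ge0.
Qed.

End VecAlg.

Section Proj.
Variables (R : realType) (d : nat).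
Implicit Types u v w x y z p q : Vec R d.

Lemma vdist_sq x y : vdist x y ^+ 2 = vdot (vsub x y) (vsub x y).
Proof. exact: vnorm_sq. Qed.

Lemma nonexp_of_var x y p q :
  vdot (vsub x p) (vsub q p) <= 0 -> vdot (vsub y q) (vsub p q) <= 0 ->
  vdist p q <= vdist x y.
Proof.
move=> h1 h2.
have E : vdot (vsub x p) (vsub q p) + vdot (vsub y q) (vsub p q) =
   vdot (vsub p q) (vsub p q) - vdot (vsub x y) (vsub p q).
  rewrite /vdot -sumrB -big_split; apply: eq_bigr => i _ /=; rewrite !tnthE; ring.
have h3 := CS (vsub x y) (vsub p q).
have s0 := vdist_ge0 p q; have r0 := vdist_ge0 x y.
rewrite -vdist_sq in E.
rewrite -/(vdist x y) -/(vdist p q) in h3.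
nra.
Qed.

Lemma proj_var (K : set (Vec R d)) x p y :
  convex_vset K -> is_proj K x p -> K y -> vdot (vsub x p) (vsub y p) <= 0.
Proof.
move=> cK [Kp pmin] Ky.
set b := vdot (vsub x p) (vsub y p); set c := vdot (vsub y p) (vsub y p).
have c0 : 0 <= c by exact: vdot_ge0.
have key : forall a, 0 <= a <= 1 -> 2 * a * b <= a ^+ 2 * c.
  move=> a a01.
  have Kz := cK y p a Ky Kp a01.
  have h := pmin _ Kz.
  have hs : vdist x p ^+ 2 <= vdist x (vadd (vscale a y) (vscale (1 - a) p)) ^+ 2.
    have := vdist_ge0 x p; nra.
  rewrite !vdist_sq in hs.
  have E : vdot (vsub x (vadd (vscale a y) (vscale (1 - a) p)))
                (vsub x (vadd (vscale a y) (vscale (1 - a) p))) =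
           vdot (vsub x p) (vsub x p) + (- 2 * a) * b + a ^+ 2 * c.
    rewrite /b /c /vdot !mulr_sumr -!big_split; apply: eq_bigr => i _ /=.
    rewrite !tnthE; ring.
  rewrite E in hs; lra.
rewrite leNgt; apply/negP => bpos.
have cpos : 0 < c.
  rewrite lt_neqAle c0 andbT; apply/eqP => c00.
  have := key 1; rewrite lexx ler01 /= => /(_ isT); rewrite -c00; nra.
set a := Num.min 1 (b / c).
have a0 : 0 < a by rewrite lt_min ltr01 divr_gt0.
have a1 : a <= 1 by rewrite ge_min lexx.
have ac : a * c <= b.
  have : a <= b / c by rewrite ge_min lexx orbT.
  by rewrite ler_pdivlMr.
have := key a; rewrite (ltW a0) a1 => /(_ isT).
nra.
Qed.

Lemma proj_nonexp (K : set (Vec R d)) (proj : Vec R d -> Vec R d) x y :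
  convex_vset K -> (forall x, is_proj K x (proj x)) ->
  vdist (proj x) (proj y) <= vdist x y.
Proof.
move=> cK hp; apply: nonexp_of_var.
- by apply: proj_var => //; case: (hp y).
- by apply: proj_var => //; case: (hp x).
Qed.

Lemma proj_in (K : set (Vec R d)) x p : is_proj K x p -> K x -> p = x.
Proof.
move=> [_ h] Kx; have := h x Kx; rewrite vdistxx => h0.
by apply/esym/vdist_eq0/eqP; rewrite eq_le h0 vdist_ge0.
Qed.

Lemma vnorm0 : vnorm (vzero R d) = 0.
Proof.
by rewrite /vnorm /vdot big1 ?sqrtr0 // => i _; rewrite tnthE mul0r.
Qed.

Section Clip.
Variable C : R.
Hypothesis C0 : 0 < C.

Lemma clip_norm v : vnorm (clipB C v) <= C.
Proof.
rewrite /clipB vnormZ.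
have m0 : 0 <= Num.min 1 (C / vnorm v).
  by rewrite le_min ler01 /= divr_ge0 ?vnorm_ge0 // ltW.
rewrite ger0_norm //.
have [->|nz] := eqVneq (vnorm v) 0; first by rewrite mulr0 ltW.
have vp : 0 < vnorm v by rewrite lt_neqAle eq_sym nz vnorm_ge0.
have : Num.min 1 (C / vnorm v) <= C / vnorm v by rewrite ge_min lexx orbT.
by rewrite ler_pdivlMr.
Qed.

Lemma clip_var u w : vnorm w <= C ->
  vdot (vsub u (clipB C u)) (vsub w (clipB C u)) <= 0.
Proof.
move=> hw; rewrite /clipB; set m := Num.min 1 (C / vnorm u).
have E : vdot (vsub u (vscale m u)) (vsub w (vscale m u)) =
   (1 - m) * (vdot u w - m * vdot u u).
  rewrite /vdot mulr_sumr -sumrB mulr_sumr; apply: eq_bigr => i _ /=.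
  rewrite !tnthE; ring.
rewrite E.
have hm1 : m <= 1 by rewrite ge_min lexx.
have m0 : 0 <= m by rewrite le_min ler01 /= divr_ge0 ?vnorm_ge0 // ltW.
have cs := CS u w.
have n0 := vnorm_ge0 u; have w0 := vnorm_ge0 w.
rewrite -(vnorm_sq u).
have [u0|unz] := eqVneq (vnorm u) 0.
  rewrite u0 in cs *; rewrite mul0r in cs.
  by rewrite expr0n /= mulr0 subr0 mulr_ge0_le0 // subr_ge0.
have up : 0 < vnorm u by rewrite lt_neqAle eq_sym unz n0.
have [uC|Cu] := leP (vnorm u) C.
  have -> : m = 1.
    by apply/eqP; rewrite eq_le hm1 le_min lexx /= ler_pdivlMr // mul1r.
  by rewrite subrr mul0r.
have -> : m = C / vnorm u.
  apply/eqP; rewrite eq_le ge_min lexx orbT le_min lexx andbT.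
  by rewrite ler_pdivrMr // mul1r ltW.
have E2 : C / vnorm u * vnorm u ^+ 2 = C * vnorm u.
  by field; rewrite unz.
rewrite E2.
have : vdot u w - C * vnorm u <= 0.
  have : vnorm u * vnorm w <= vnorm u * C by rewrite ler_pM2l.
  lra.
move=> h; apply: mulr_ge0_le0 => //; rewrite subr_ge0.
by rewrite ler_pdivrMr // mul1r ltW.
Qed.

Lemma clip_nonexp u v : vdist (clipB C u) (clipB C v) <= vdist u v.
Proof. by apply: nonexp_of_var; apply: clip_var; apply: clip_norm. Qed.

End Clip.

Section BigV.
Variable n : nat.
Local Notation BS F := (\big[@vadd R d/vzero R d]_(i < n) F i).

Lemma tnth_big (F : 'I_n -> Vec R d) k : tnth (BS F) k = \sum_(i < n) tnth (F i) k.
Proof.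
by apply: (big_morph (fun v => tnth v k) (fun a b => tnth_vadd a b k) (tnth_vzero R k)).
Qed.

Lemma vnorm_big (F : 'I_n -> Vec R d) : vnorm (BS F) <= \sum_(i < n) vnorm (F i).
Proof.
apply: (big_ind2 (fun v r => vnorm v <= r)).
- by rewrite vnorm0.
- move=> a1 a2 b1 b2 h1 h2; apply: (le_trans (vnorm_add _ _)); exact: lerD.
- by [].
Qed.

Lemma vsub_big (F F' : 'I_n -> Vec R d) :
  vsub (BS F) (BS F') = BS (fun i => vsub (F i) (F' i)).
Proof.
apply: eq_from_tnth => k; rewrite tnthE !tnth_big -sumrB.
by apply: eq_bigr => i _; rewrite tnthE.
Qed.

End BigV.
End Proj.

Section Sync.
Variables (R : realType) (d n : nat) (Kset : set (Vec R d)) (proj : Vec R d -> Vec R d).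
Variables (gi gi' : 'I_n -> Vec R d -> Vec R d) (j : 'I_n) (L lam eta C : R).
Hypothesis cK : convex_vset Kset.
Hypothesis hp : forall x, is_proj Kset x (proj x).
Hypothesis gij : forall i, i != j -> gi i = gi' i.
Hypothesis hol : forall i w w', Kset w -> Kset w' ->
  vdist (gi i w) (gi i w') <= L * vdist w w' `^ lam.
Hypotheses (L0 : 0 <= L) (lam0 : 0 < lam) (eta0 : 0 < eta) (C0 : 0 < C).

Local Notation BS F := (\big[@vadd R d/vzero R d]_(i < n) F i).

Lemma vdist_le_norms (a b : Vec R d) : vdist a b <= vnorm a + vnorm b.
Proof.
rewrite /vdist; have -> : vsub a b = vadd a (vscale (-1) b).
  by apply: eq_from_tnth => i; rewrite !tnthE; ring.
by apply: (le_trans (vnorm_add _ _)); rewrite vnormN.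
Qed.

Lemma clip_dist2C (a b : Vec R d) : vdist (clipB C a) (clipB C b) <= 2 * C.
Proof.
apply: (le_trans (vdist_le_norms _ _)).
have := clip_norm C0 a; have := clip_norm C0 b; lra.
Qed.

Lemma step_bound (w w' g : Vec R d) :
  w = w' \/ (Kset w /\ Kset w') ->
  vdist (proj (vadd (vsub w (vscale (eta / n%:R)
                   (BS (fun i => clipB C (gi i w))))) g))
        (proj (vadd (vsub w' (vscale (eta / n%:R)
                   (BS (fun i => clipB C (gi' i w'))))) g)) <=
  Num.min (vdist w w' + eta * L * vdist w w' `^ lam + 2 * eta * C / n%:R)
          (vdist w w' + 2 * eta * C).
Proof.
move=> hww'.
have npos : (0 < n)%N by case: n j => // -[].
have nR : 0 < n%:R :> R by rewrite ltr0n.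
set del := vdist w w'.
have del0 : 0 <= del by exact: vdist_ge0.
set S := BS (fun i => clipB C (gi i w)); set S' := BS (fun i => clipB C (gi' i w')).
have h1 : vdist (proj (vadd (vsub w (vscale (eta / n%:R) S)) g)) (proj (vadd (vsub w' (vscale (eta / n%:R) S')) g)) <= del + eta / n%:R * vnorm (vsub S S').
  apply: (le_trans (proj_nonexp _ _ cK hp)).
  rewrite /vdist.
  have -> : vsub (vadd (vsub w (vscale (eta / n%:R) S)) g)
                 (vadd (vsub w' (vscale (eta / n%:R) S')) g) =
            vadd (vsub w w') (vscale (- (eta / n%:R)) (vsub S S')).
    by apply: eq_from_tnth => i; rewrite !tnthE; ring.
  apply: (le_trans (vnorm_add _ _)); rewrite vnormZ normrN ger0_norm //.
  by rewrite divr_ge0 // ltW.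
have h2 : vnorm (vsub S S') <= \sum_(i < n) vdist (clipB C (gi i w)) (clipB C (gi' i w')).
  by rewrite /S /S' vsub_big; exact: vnorm_big.
have hterm : forall i, i != j ->
    vdist (clipB C (gi i w)) (clipB C (gi' i w')) <= L * del `^ lam.
  move=> i ij; rewrite -(gij ij); apply: (le_trans (clip_nonexp C0 _ _)).
  case: hww' => [<-|[Kw Kw']]; last exact: hol.
  by rewrite vdistxx mulr_ge0 // powR_ge0.
have h3 : \sum_(i < n) vdist (clipB C (gi i w)) (clipB C (gi' i w')) <=
          2 * C + n%:R * (L * del `^ lam).
  rewrite (bigD1 j) //=; apply: lerD; first exact: clip_dist2C.
  apply: (le_trans (y := \sum_(i < n | i != j) L * del `^ lam)).
    by apply: ler_sum => i ij; exact: hterm.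
  apply: (le_trans (y := \sum_(i < n) L * del `^ lam)).
    rewrite [X in _ <= X](bigD1 j) //=; apply: ler_wpDl; last exact: lexx.
    by rewrite mulr_ge0 // powR_ge0.
  by rewrite sumr_const card_ord mulr_natl.
have h4 : \sum_(i < n) vdist (clipB C (gi i w)) (clipB C (gi' i w')) <= n%:R * (2 * C).
  apply: (le_trans (y := \sum_(i < n) 2 * C)).
    by apply: ler_sum => i _; exact: clip_dist2C.
  by rewrite sumr_const card_ord [X in _ <= X]mulrC mulr_natr.
have en0 : 0 <= eta / n%:R by rewrite divr_ge0 // ltW.
rewrite le_min; apply/andP; split.
  apply: (le_trans h1).
  have : eta / n%:R * vnorm (vsub S S') <= eta / n%:R * (2 * C + n%:R * (L * del `^ lam)).
    by apply: ler_wpM2l => //; exact: (le_trans h2 h3).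
  have -> : eta / n%:R * (2 * C + n%:R * (L * del `^ lam)) =
            eta * L * del `^ lam + 2 * eta * C / n%:R.
    by field; rewrite gt_eqF.
  lra.
apply: (le_trans h1).
have : eta / n%:R * vnorm (vsub S S') <= eta / n%:R * (n%:R * (2 * C)).
  by apply: ler_wpM2l => //; exact: (le_trans h2 h4).
have -> : eta / n%:R * (n%:R * (2 * C)) = 2 * eta * C by field; rewrite gt_eqF.
lra.
Qed.

Lemma sgd_inK (T : Type) (gg : 'I_n -> Vec R d -> Vec R d) (G : nat -> T -> Vec R d) w0 t om :
  Kset (noisy_sgd proj gg eta C G w0 t.+1 om).
Proof. by rewrite /=; match goal with |- Kset (proj ?z) => case: (hp z) end. Qed.

Lemma sync_iter (T : Type) (G : nat -> T -> Vec R d) w0 t om :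
  vdist (noisy_sgd proj gi eta C G w0 t om) (noisy_sgd proj gi' eta C G w0 t om)
  <= Dseq lam eta L C n t.
Proof.
elim: t => [|t IH]; first by rewrite /= vdistxx.
have hww : noisy_sgd proj gi eta C G w0 t om = noisy_sgd proj gi' eta C G w0 t om \/
    (Kset (noisy_sgd proj gi eta C G w0 t om) /\ Kset (noisy_sgd proj gi' eta C G w0 t om)).
  case: t IH => [|t] IH; first by left.
  by right; split; apply: sgd_inK.
have := step_bound (G t om) hww.
rewrite -/(noisy_sgd proj gi eta C G w0 t.+1 om) -/(noisy_sgd proj gi' eta C G w0 t.+1 om).
move=> h; apply: (le_trans h) => /=.
set del := vdist _ _ in IH *.
set D' := Dseq lam eta L C n t in IH *.
have del0 : 0 <= del by exact: vdist_ge0.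
rewrite /gfun le_min !ge_min; apply/andP; split; apply/orP.
- left.
  have : del `^ lam <= D' `^ lam.
    by apply: ge0_ler_powR => //; rewrite ?ltW // nnegrE //; apply: (le_trans del0).
  have eL : 0 <= eta * L by rewrite mulr_ge0 // ltW.
  move=> hp'; have := ler_wpM2l eL hp'; lra.
- right; lra.
Qed.

End Sync.

Section Meas.
Variables (R : realType) (d : nat).
Local Notation V := (Vec R d).

Definition ucontR (f : V -> V -> R) := forall e, 0 < e -> exists2 del, 0 < del &
  forall a b a' b', vdist a a' < del -> vdist b b' < del -> `|f a b - f a' b'| < e.

Definition zt (c : R) (v : V) : d.-tuple int := [tuple Num.floor (c * tnth v i) | i < d].
Definition emb (c : R) (a : d.-tuple int) : V := [tuple (tnth a i)%:~R / c | i < d].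
Definition rnd (k : nat) (v : V) : V := emb (k.+1)%:R (zt (k.+1)%:R v).

Lemma floor_set (z : int) : [set r : R | Num.floor r = z] = [set` `[z%:~R, (z + 1)%:~R[%R].
Proof.
apply/seteqP; split => r /=; rewrite in_itv /=.
  by move=> <-; rewrite floor_le floorD1_gt.
move/andP=> [h1 h2]; apply/eqP; rewrite eq_le.
rewrite floor_ge_int h1 andbT -ltzD1 floor_lt_int //.
Qed.

Context {dT : measure_display} {T : measurableType dT}.

Lemma meas_floor_eq (g : T -> R) c z : measurable_fun setT g ->
  measurable [set x | Num.floor (c * g x) = z].
Proof.
move=> mg.
have mcg : measurable_fun setT (fun x => c * g x).
  exact: (measurable_funM (measurable_cst c) mg).
have -> : [set x | Num.floor (c * g x) = z] =
    setT `&` (fun x => c * g x) @^-1` [set r : R | Num.floor r = z] by rewrite setTI.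
by apply: mcg => //; rewrite floor_set; exact: measurable_itv.
Qed.

Lemma meas_zt (u : T -> V) c a : measurable_fun setT u ->
  measurable [set x | zt c (u x) = a].
Proof.
move=> mu.
have -> : [set x | zt c (u x) = a] =
    \bigcap_(i in [set: 'I_d]) [set x | Num.floor (c * tnth (u x) i) = tnth a i].
  apply/seteqP; split => x /=.
    by move=> <- i _; rewrite /zt tnth_mktuple.
  move=> h; apply: eq_from_tnth => i; rewrite /zt tnth_mktuple; exact: h.
apply: fin_bigcap_measurable; first exact: finite_finset.
move=> i _; apply: meas_floor_eq.
exact: (measurableT_comp (measurable_tnth i) mu).
Qed.

Lemma meas_countable (U : countType) (phi : T -> U) (F : U -> R) :
  (forall a, measurable (phi @^-1` [set a])) -> measurable_fun setT (F \o phi).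
Proof.
move=> mphi _ B mB; rewrite setTI.
have -> : (F \o phi) @^-1` B =
    \bigcup_(a : U) (if pselect (B (F a)) then phi @^-1` [set a] else set0).
  apply/seteqP; split => x /=.
    move=> h; exists (phi x) => //; case: pselect => // _; by [].
  by move=> [a _]; case: pselect => //= Ba ->.
apply: countable_bigcupT_measurable; first exact: countableP.
by move=> a; case: pselect => h; [exact: mphi | exact: measurable0].
Qed.

Lemma meas_rnd_comp (f : V -> V -> R) (u1 u2 : T -> V) k :
  measurable_fun setT u1 -> measurable_fun setT u2 ->
  measurable_fun setT (fun x => f (rnd k (u1 x)) (rnd k (u2 x))).
Proof.
move=> m1 m2.
pose c : R := (k.+1)%:R.
pose phi := fun x => (zt c (u1 x), zt c (u2 x)).
pose F := fun p : (d.-tuple int * d.-tuple int) => f (emb c p.1) (emb c p.2).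
apply: (@meas_countable _ phi F) => -[a b].
have -> : phi @^-1` [set (a, b)] = [set x | zt c (u1 x) = a] `&` [set x | zt c (u2 x) = b].
  apply/seteqP; split => x /=.
    by rewrite /phi => -[<- <-].
  by move=> [<- <-].
by apply: measurableI; exact: meas_zt.
Qed.

Lemma vnorm_lt_sq (u : V) (r : R) : 0 < r -> vdot u u < r ^+ 2 -> vnorm u < r.
Proof.
move=> r0 h; rewrite /vnorm -[X in _ < X](ger0_norm (ltW r0)) -sqrtr_sqr ltr_sqrt //.
by rewrite exprn_gt0.
Qed.

Lemma rnd_close (v : V) e : 0 < e -> \forall k \near \oo, vdist v (rnd k v) < e.
Proof.
move=> e0.
near=> k.
have hk : d%:R / e ^+ 2 < k%:R by near: k; exact: nbhs_infty_gtr.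
set c : R := (k.+1)%:R.
have c1 : 1 <= c by rewrite /c ler1n.
have c0 : 0 < c by lra.
have hc : d%:R / e ^+ 2 < c.
  apply: (lt_le_trans hk); rewrite /c ler_nat; exact: leqnSn.
apply: vnorm_lt_sq => //.
apply: (le_lt_trans (y := \sum_(i < d) c^-1)).
  rewrite /vdot; apply: ler_sum => i _; rewrite -expr2 !tnthE /rnd /emb /zt !tnth_mktuple.
  set x := tnth v i.
  have f1 : (Num.floor (c * x))%:~R <= c * x := floor_le _.
  have f2 : c * x < (Num.floor (c * x) + 1)%:~R := floorD1_gt _.
  rewrite intrD in f2.
  set fl := (Num.floor (c * x))%:~R in f1 f2 *.
  have E : x - fl / c = (c * x - fl) / c by field; lra.
  rewrite E expr_div_n.
  rewrite ler_pdivrMr ?exprn_gt0 //.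
  have -> : c^-1 * c ^+ 2 = c by field; lra.
  have h0 : 0 <= c * x - fl by lra.
  have h1 : c * x - fl <= 1 by lra.
  nra.
rewrite sumr_const card_ord -mulr_natr mulrC ltr_pdivrMr //.
by rewrite ltr_pdivrMr ?exprn_gt0 // mulrC in hc.
Unshelve. all: end_near. Qed.

Lemma meas_ucontR (f : V -> V -> R) (u1 u2 : T -> V) :
  ucontR f -> measurable_fun setT u1 -> measurable_fun setT u2 ->
  measurable_fun setT (fun x => f (u1 x) (u2 x)).
Proof.
move=> hf m1 m2.
apply: (measurable_fun_cvg (h := fun k x => f (rnd k (u1 x)) (rnd k (u2 x)))).
  by move=> k; exact: meas_rnd_comp.
move=> x _; apply/cvgrPdist_lt => e e0.
have [del del0 H] := hf e e0.
near=> k; apply: H; near: k; exact: rnd_close.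
Unshelve. all: end_near. Qed.

Lemma meas_ucontV (Phi : V -> V -> V) (u1 u2 : T -> V) :
  (forall i, ucontR (fun a b => tnth (Phi a b) i)) ->
  measurable_fun setT u1 -> measurable_fun setT u2 ->
  measurable_fun setT (fun x => Phi (u1 x) (u2 x)).
Proof.
move=> hP m1 m2; apply/measurable_fun_tnthP => i.
exact: (meas_ucontR (f := fun a b => tnth (Phi a b) i)).
Qed.

End Meas.

Section Ucont.
Variables (R : realType) (d : nat).
Local Notation V := (Vec R d).

Lemma ucont_of_bound (Phi : V -> V -> V) (M lam : R) :
  0 <= M -> 0 < lam ->
  (forall a b a' b', vdist (Phi a b) (Phi a' b') <=
      vdist a a' + M * vdist a a' `^ lam + vdist b b') ->
  forall i, ucontR (fun a b => tnth (Phi a b) i).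
Proof.
move=> M0 lam0 hb i e e0.
set q := e / 4.
have q0 : 0 < q by rewrite divr_gt0.
set r := q / (M + 1).
have r0 : 0 < r by rewrite divr_gt0 // ltr_wpDl.
set del := Num.min q (r `^ lam^-1).
have del0 : 0 < del by rewrite lt_min q0 powR_gt0.
exists del => // a b a' b' ha hb'.
apply: (le_lt_trans (tnth_le_vdist _ _ _)); apply: (le_lt_trans (hb _ _ _ _)).
have x0 := vdist_ge0 a a'.
have hx : vdist a a' < q by apply: (lt_le_trans ha); rewrite ge_min lexx.
have hy : vdist b b' < q by apply: (lt_le_trans hb'); rewrite ge_min lexx.
have hpow : vdist a a' `^ lam <= r.
  have h1 : vdist a a' `^ lam <= (r `^ lam^-1) `^ lam.
    apply: ge0_ler_powR.
    - exact: ltW.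
    - by rewrite nnegrE.
    - by rewrite nnegrE powR_ge0.
    - by apply: (le_trans (ltW ha)); rewrite ge_min lexx orbT.
  by move: h1; rewrite -powRrM mulVf ?gt_eqF // powRr1 // ltW.
have hM : M * vdist a a' `^ lam <= q.
  apply: (le_trans (ler_wpM2l M0 hpow)); rewrite /r.
  rewrite mulrA ler_pdivrMr ?ltr_wpDl // ; nra.
have : 3 * q < e by rewrite /q; lra.
lra.
Qed.

Lemma ucontR_vdist : ucontR (fun a b : V => vdist a b).
Proof.
move=> e e0; exists (e / 2); first by rewrite divr_gt0.
move=> a b a' b' h1 h2.
have t1 := vdist_triangle a a' b; have t2 := vdist_triangle a' b' b.
have t3 := vdist_triangle a' a b'; have t4 := vdist_triangle a b b'.
rewrite (vdistC b' b) in t2; rewrite (vdistC a' a) in t3.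
rewrite ltr_norml; apply/andP; split; lra.
Qed.

End Ucont.

Section MeasSGD.
Variables (R : realType) (d n : nat) (Kset : set (Vec R d)) (proj : Vec R d -> Vec R d).
Variables (gi : 'I_n -> Vec R d -> Vec R d) (L lam eta C : R).
Hypothesis cK : convex_vset Kset.
Hypothesis hp : forall x, is_proj Kset x (proj x).
Hypothesis hol : forall i w w', Kset w -> Kset w' ->
  vdist (gi i w) (gi i w') <= L * vdist w w' `^ lam.
Hypotheses (L0 : 0 <= L) (lam0 : 0 < lam) (eta0 : 0 < eta) (C0 : 0 < C).

Local Notation BS F := (\big[@vadd R d/vzero R d]_(i < n) F i).
Local Notation V := (Vec R d).

Definition PhiS (a b : V) : V :=
  proj (vadd (vsub a (vscale (eta / n%:R) (BS (fun i => clipB C (gi i (proj a)))))) b).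

Lemma PhiS_bound a b a' b' : vdist (PhiS a b) (PhiS a' b') <=
  vdist a a' + (eta / n%:R * (n%:R * L)) * vdist a a' `^ lam + vdist b b'.
Proof.
rewrite /PhiS; apply: (le_trans (proj_nonexp _ _ cK hp)).
set S := BS (fun i => clipB C (gi i (proj a))).
set S' := BS (fun i => clipB C (gi i (proj a'))).
have en0 : 0 <= eta / n%:R by rewrite divr_ge0 // ltW.
rewrite /vdist.
have -> : vsub (vadd (vsub a (vscale (eta / n%:R) S)) b)
               (vadd (vsub a' (vscale (eta / n%:R) S')) b') =
          vadd (vadd (vsub a a') (vscale (- (eta / n%:R)) (vsub S S'))) (vsub b b').
  by apply: eq_from_tnth => i; rewrite !tnthE; ring.
apply: (le_trans (vnorm_add _ _)); rewrite lerD2r.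
apply: (le_trans (vnorm_add _ _)); rewrite lerD2l vnormZ normrN ger0_norm //.
rewrite -mulrA; apply: ler_wpM2l => //.
rewrite /S /S' vsub_big; apply: (le_trans (vnorm_big _)).
apply: (le_trans (y := \sum_(i < n) L * vdist a a' `^ lam)).
  apply: ler_sum => i _; apply: (le_trans (clip_nonexp C0 _ _)).
  apply: (le_trans (hol _ (hp a).1 (hp a').1)); apply: ler_wpM2l => //.
  apply: ge0_ler_powR.
  - exact: ltW.
  - by rewrite nnegrE vdist_ge0.
  - by rewrite nnegrE vdist_ge0.
  - exact: (proj_nonexp _ _ cK hp).
by rewrite sumr_const card_ord -mulrA mulr_natl.
Qed.

Context {dT : measure_display} {T : measurableType dT}.

Lemma meas_sgd (G : nat -> T -> V) w0 t :
  (forall s, measurable_fun setT (G s)) ->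
  measurable_fun setT (noisy_sgd proj gi eta C G w0 t).
Proof.
move=> mG.
case: t => [|t]; first exact: measurable_cst.
elim: t => [|t IH].
  pose c0 := vsub w0 (vscale (eta / n%:R) (BS (fun i => clipB C (gi i w0)))).
  pose Phi0 := fun (a b : V) => proj (vadd c0 b).
  have -> : noisy_sgd proj gi eta C G w0 1 = fun om => Phi0 (G 0 om) (G 0 om) by [].
  apply: meas_ucontV => //.
  apply: (@ucont_of_bound _ _ _ 0 lam) => // a b a' b'.
  apply: (le_trans (proj_nonexp _ _ cK hp)); rewrite mul0r addr0.
  have -> : vdist (vadd c0 b) (vadd c0 b') = vdist b b'.
    by rewrite /vdist; congr vnorm; apply: eq_from_tnth => i; rewrite !tnthE; ring.
  by rewrite lerDr vdist_ge0.
have -> : noisy_sgd proj gi eta C G w0 t.+2 =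
    fun om => PhiS (noisy_sgd proj gi eta C G w0 t.+1 om) (G t.+1 om).
  apply: funext => om; rewrite /PhiS.
  have Kw : Kset (noisy_sgd proj gi eta C G w0 t.+1 om).
    by rewrite /=; match goal with |- Kset (proj ?z) => case: (hp z) end.
  by rewrite (proj_in (hp _) Kw).
apply: meas_ucontV => //.
apply: (ucont_of_bound (M := eta / n%:R * (n%:R * L)) (lam := lam)) => //.
  by rewrite !mulr_ge0 // ?invr_ge0 // ltW.
exact: PhiS_bound.
Qed.

End MeasSGD.

Section Boxes.
Variables (R : realType) (m : nat).

Definition box (B : 'I_m -> set R) : set (m.-tuple R) :=
  \bigcap_(k in [set: 'I_m]) ((fun x => tnth x k) @^-1` B k).
Definition boxes : set (set (m.-tuple R)) :=
  [set box B | B in [set B | forall k, measurable (B k)]].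

Lemma box_measurable B : (forall k, measurable (B k)) -> measurable (box B).
Proof.
move=> mB; apply: fin_bigcap_measurable; first exact: finite_finset.
move=> k _; rewrite -[X in measurable X]setTI; exact: measurable_tnth.
Qed.

Lemma boxes_measurable : measurable = <<s boxes >>.
Proof.
apply/seteqP; split; last first.
  apply: smallest_sub; first exact: sigma_algebra_measurable.
  by move=> _ [B mB <-]; exact: box_measurable.
move=> A; rewrite /measurable /=.
apply: smallest_sub; first exact: smallest_sigma_algebra.
apply: (big_ind (fun S => S `<=` <<s boxes >>)).
- by move=> X.
- by move=> S1 S2 h1 h2 X [/h1|/h2].
- move=> i _ X [Y mY <-].
  apply: sub_sigma_algebra.
  exists (fun k => if k == i then Y else setT).
    by move=> k /=; case: ifP.
  apply/seteqP; split => x /=.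
    by move=> h; split => //; have := h i I; rewrite eqxx.
  move=> [_ hx] k _; case: ifP => // /eqP ->; exact: hx.
Qed.

Lemma boxes_setI : setI_closed boxes.
Proof.
move=> _ _ [B mB <-] [B' mB' <-].
exists (fun k => B k `&` B' k).
  by move=> k; apply: measurableI; [exact: mB | exact: mB'].
apply/seteqP; split => x /=.
  by move=> h; split => k _; have [] := h k I.
by move=> [h1 h2] k _; split; [exact: h1 | exact: h2].
Qed.

Lemma boxT : boxes setT.
Proof.
exists (fun _ => setT) => //.
by apply/seteqP; split => x //= _ k _.
Qed.

End Boxes.

Definition mkM d1 d2 (T1 : measurableType d1) (T2 : measurableType d2)
  (f : T1 -> T2) (mf : measurable_fun setT f) : {mfun T1 >-> T2} :=
  mfun_Sub (mem_set mf : f \in mfun).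

Lemma sgd_ext (R : realType) (d n : nat) (T1 T2 : Type) (proj : Vec R d -> Vec R d)
  (grads : 'I_n -> Vec R d -> Vec R d) (eta C : R)
  (G1 : nat -> T1 -> Vec R d) (G2 : nat -> T2 -> Vec R d) w0 t om1 om2 :
  (forall s, (s < t)%N -> G1 s om1 = G2 s om2) ->
  noisy_sgd proj grads eta C G1 w0 t om1 = noisy_sgd proj grads eta C G2 w0 t om2.
Proof.
elim: t => [//|t IH] h /=.
rewrite IH; last by move=> s st; apply: h; exact: (ltn_trans st).
by rewrite h.
Qed.

Section Law.
Variables (R : realType) (d t : nat) (dO : measure_display) (Omega : measurableType dO).
Variables (P : probability Omega R) (sigma : R).
Local Notation Ix := ('I_t * 'I_d)%type.
Local Notation m := #|{: Ix}|.

Definition idx (k : 'I_m) : nat * 'I_d := let p := (enum_val k : Ix) in (val p.1, p.2).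

Lemma idx_inj : injective idx.
Proof.
move=> k1 k2; rewrite /idx => -[h1 h2]; apply: enum_val_inj.
move: h1 h2; case: (enum_val k1) => [a b]; case: (enum_val k2) => [a' b'] /=.
by move=> /val_inj -> ->.
Qed.

Lemma idx_rank (s : 'I_t) (i : 'I_d) : idx (enum_rank (s, i)) = (val s, i).
Proof. by rewrite /idx enum_rankK. Qed.

Definition Zof (G : nat -> Omega -> Vec R d) (om : Omega) : m.-tuple R :=
  [tuple tnth (G (idx k).1 om) (idx k).2 | k < m].

Definition Gt (s : nat) (x : m.-tuple R) : Vec R d :=
  if (insub s : option 'I_t) is Some s' then [tuple tnth x (enum_rank (s', i)) | i < d]
  else vzero R d.

Lemma Gt_Z G s om : (s < t)%N -> Gt s (Zof G om) = G s om.
Proof.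
move=> st; rewrite /Gt insubT /=; apply: eq_from_tnth => i.
by rewrite !tnth_mktuple idx_rank.
Qed.

Lemma meas_Gt s : measurable_fun setT (Gt s).
Proof.
rewrite /Gt; case: insub => [s'|]; last exact: measurable_cst.
apply/measurable_fun_tnthP => i.
have -> : (fun x => tnth x i) \o (fun x : m.-tuple R => [tuple tnth x (enum_rank (s', i0)) | i0 < d])
  = (fun x => tnth x (enum_rank (s', i))).
  by apply: funext => x /=; rewrite tnth_mktuple.
exact: measurable_tnth.
Qed.

Lemma meas_Z G : iid_gaussian_noise P sigma G -> measurable_fun setT (Zof G).
Proof.
move=> [hm _ _]; apply/measurable_fun_tnthP => k.
have -> : (fun x => tnth x k) \o Zof G = (fun om => tnth (G (idx k).1 om) (idx k).2).
  by apply: funext => om /=; rewrite tnth_mktuple.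
exact: (hm (idx k)).
Qed.

Section BoxLaw.
Variable B : 'I_m -> set R.
Hypothesis mB : forall k, measurable (B k).

Let S := map idx (enum 'I_m).
Let Bt (ti : nat * 'I_d) : set R := if [pick k | idx k == ti] is Some k then B k else setT.

Let Bt_idx k : Bt (idx k) = B k.
Proof.
rewrite /Bt; case: pickP => [k' /eqP h|/(_ k)]; last by rewrite eqxx.
by rewrite (idx_inj h).
Qed.

Let mBt ti : measurable (Bt ti).
Proof. by rewrite /Bt; case: pickP => [k _|_]; [exact: mB | exact: measurableT]. Qed.

Let uS : uniq S.
Proof. by rewrite map_inj_uniq ?enum_uniq //; exact: idx_inj. Qed.

Let preimE G : Zof G @^-1` box B =
  \bigcap_(ti in [set` S]) ((fun om => tnth (G ti.1 om) ti.2) @^-1` Bt ti).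
Proof.
apply/seteqP; split => om /=.
  move=> h ti /= /mapP [k _ ->]; rewrite Bt_idx.
  by move: (h k I); rewrite /preimage /= /Zof tnth_mktuple.
move=> h k _; rewrite /preimage /= /Zof tnth_mktuple.
have hk : [set` S] (idx k).
  by apply/mapP; exists k => //; rewrite mem_enum.
have h2 := h (idx k) hk.
rewrite /preimage /= Bt_idx in h2.
exact: h2.
Qed.

Lemma law_box G G' : iid_gaussian_noise P sigma G -> iid_gaussian_noise P sigma G' ->
  P (Zof G @^-1` box B) = P (Zof G' @^-1` box B).
Proof.
move=> [hm hl hi] [hm' hl' hi'].
rewrite !preimE (hi S Bt uS mBt) (hi' S Bt uS mBt).
apply: eq_bigr => ti _.
by rewrite (hl _ _ (mBt ti)) (hl' _ _ (mBt ti)).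
Qed.

End BoxLaw.

Lemma law_eq G G' (F : m.-tuple R -> Vec R d) (A : set (Vec R d)) :
  iid_gaussian_noise P sigma G -> iid_gaussian_noise P sigma G' ->
  measurable_fun setT F -> measurable A ->
  P ((F \o Zof G) @^-1` A) = P ((F \o Zof G') @^-1` A).
Proof.
move=> hG hG' mF mA.
pose m1 := distribution P (mkM (meas_Z hG)).
pose m2 := distribution P (mkM (meas_Z hG')).
have mFA : measurable (F @^-1` A) by rewrite -[X in measurable X]setTI; exact: mF.
have -> : (F \o Zof G) @^-1` A = Zof G @^-1` (F @^-1` A) by [].
have -> : (F \o Zof G') @^-1` A = Zof G' @^-1` (F @^-1` A) by [].
have := (@measure_unique _ R _ (@boxes R m) (fun=> setT) (@boxes_measurable R m)
  (@boxes_setI R m) (fun=> @boxT R m) _ m1 m2).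
apply => //.
- by apply/seteqP; split => x // _; exists 0%N.
- by move=> _ [B mB <-]; exact: law_box.
- by move=> _ /=; rewrite /m1 probability_setT ltry.
Qed.

End Law.

Unset Implicit Arguments. Set Strict Implicit. Set Printing Implicit Defensive.

Theorem mainTheorem10
  (R : realType) (d n : nat) (X : Type)
  (Kset : set (Vec R d)) (D : R) (proj : Vec R d -> Vec R d)
  (loss : X -> Vec R d -> R) (grad : X -> Vec R d -> Vec R d)
  (data data' : 'I_n -> X)
  (L lam eta C sigma : R)
  (dO : measure_display) (Omega : measurableType dO) (P : probability Omega R)
  (G G' : nat -> Omega -> Vec R d) (w0 : Vec R d) :
  (* K: nonempty closed convex set of diameter D, proj its Euclidean projection *)
  Kset !=set0 -> closed_vset Kset -> convex_vset Kset -> is_diameter Kset D ->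
  (forall x, is_proj Kset x (proj x)) ->
  (* losses differentiable on K with gradients grad *)
  (forall (z : X) (w : Vec R d), Kset w -> has_gradient_at (loss z) w (grad z w)) ->
  (* adjacent datasets: differ in exactly one index *)
  (exists j : 'I_n, data j <> data' j /\ forall i, i != j -> data i = data' i) ->
  (* Hoelder gradients *)
  0 <= L -> 0 < lam <= 1 ->
  (forall i : 'I_n, holder_on Kset L lam (grad (data i)) /\
                    holder_on Kset L lam (grad (data' i))) ->
  (* step size, clipping threshold, noise level *)
  0 < eta -> 0 < C -> 0 < sigma ->
  (* i.i.d. Gaussian noise N(0, sigma^2 I_d) for both runs *)
  iid_gaussian_noise P sigma G -> iid_gaussian_noise P sigma G' ->
  forall t : nat,
    (W_infty
       (pushforward P (noisy_sgd proj (fun i => grad (data i)) eta C G w0 t))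
       (pushforward P (noisy_sgd proj (fun i => grad (data' i)) eta C G' w0 t))
     <= (Num.min (Dseq lam eta L C n t) D)%:E)%E.
Proof.
move=> [k0 Kk0] _ cK [diam1 _] hp _ [j [_ hdata]] L0 /andP[lam0 _] hhol eta0 C0 _ hG hG' t.
set gi := fun i => grad (data i).
set gi' := fun i => grad (data' i).
have hol : forall i w w', Kset w -> Kset w' -> vdist (gi i w) (gi i w') <= L * vdist w w' `^ lam.
  by move=> i w w' Kw Kw'; exact: (hhol i).1.
have hol' : forall i w w', Kset w -> Kset w' -> vdist (gi' i w) (gi' i w') <= L * vdist w w' `^ lam.
  by move=> i w w' Kw Kw'; exact: (hhol i).2.
have gij : forall i, i != j -> gi i = gi' i by move=> i ij; rewrite /gi /gi' hdata.
have mGs : forall (H : nat -> Omega -> Vec R d), iid_gaussian_noise P sigma H ->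
    forall s, measurable_fun setT (H s).
  move=> H [hm _ _] s; apply/measurable_fun_tnthP => i; exact: (hm (s, i)).
pose W := noisy_sgd proj gi eta C G w0 t.
pose W2 := noisy_sgd proj gi' eta C G w0 t.
have mW : measurable_fun setT W by apply: (meas_sgd cK hp hol) => //; exact: mGs.
have mW2 : measurable_fun setT W2 by apply: (meas_sgd cK hp hol') => //; exact: mGs.
have mpm : measurable_fun setT (fun om => (W om, W2 om)) by exact: measurable_fun_pair.
pose g := distribution P (mkM mpm).
set b := Num.min (Dseq lam eta L C n t) D.
have D0 : 0 <= D by have := diam1 _ _ Kk0 Kk0; rewrite vdistxx.
have pointwise : forall om, vdist (W om) (W2 om) <= b.
  move=> om; rewrite le_min; apply/andP; split.
    exact: (sync_iter cK hp gij hol).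
  rewrite /W /W2; case: (t) => [|t']; first by rewrite /= vdistxx.
  by apply: diam1; apply: (sgd_inK eta C hp).
have law2 : forall A, measurable A ->
    P (W2 @^-1` A) = P (noisy_sgd proj gi' eta C G' w0 t @^-1` A).
  move=> A mA.
  pose F := noisy_sgd proj gi' eta C (@Gt R d t) w0 t.
  have mF : measurable_fun setT F.
    by apply: (meas_sgd cK hp hol') => //; exact: meas_Gt.
  have E1 : W2 = F \o Zof t G.
    apply: funext => om /=; apply: sgd_ext => s st; by rewrite Gt_Z.
  have E2 : noisy_sgd proj gi' eta C G' w0 t = F \o Zof t G'.
    apply: funext => om /=; apply: sgd_ext => s st; by rewrite Gt_Z.
  rewrite E1 E2; exact: (law_eq hG hG' mF mA).
apply: (@le_trans _ _ (ess_sup g (fun z => (vdist z.1 z.2)%:E))).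
  apply: ereal_inf_lbound; exists g => //.
  move=> A mA; split.
    rewrite /g /distribution /pushforward /=; congr (P _).
    by apply/seteqP; split => om /=; [case | move=> h; split].
  rewrite /g /distribution /pushforward /= -law2 //; congr (P _).
  by apply/seteqP; split => om /=; [case | move=> h; split].
apply/ess_supP.
have mN : measurable [set z : Vec R d * Vec R d | b < vdist z.1 z.2].
  have mv : measurable_fun setT (fun z : Vec R d * Vec R d => vdist z.1 z.2).
    exact: (meas_ucontR (ucontR_vdist d) measurable_fst measurable_snd).
  have -> : [set z : Vec R d * Vec R d | b < vdist z.1 z.2] =
      setT `&` (fun z : Vec R d * Vec R d => vdist z.1 z.2) @^-1` `]b, +oo[.
    by apply/seteqP; split => z /=; rewrite in_itv /= andbT; [move=> h; split | case].
  by apply: mv => //; exact: measurable_itv.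
have E0 : (fun om => (W om, W2 om)) @^-1` [set z : Vec R d * Vec R d | b < vdist z.1 z.2] = set0.
  rewrite predeqE => om; split => //=.
  by have := pointwise om; rewrite leNgt => /negP.
exists [set z : Vec R d * Vec R d | b < vdist z.1 z.2]; split => //.
  change (P ((fun om => (W om, W2 om)) @^-1` [set z : Vec R d * Vec R d | b < vdist z.1 z.2]) = 0%E).
  by rewrite E0 measure0.
move=> z /=; rewrite lee_fin => h; rewrite ltNge; exact/negP.
Qed.
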